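(* Let $n>1$ be an integer, let $D'\in\mathcal{T}_{n-1}$ and let $b\in V(D')$. Let $D$ be the digraph with $V(D)=V(D')\cup\{a\}$, where $a$ is a new vertex, and whose arc set is defined by one of the following rules: (i) if $b$ is domination-forced in $D'$, then $A(D)=A(D')\cup\{ba,aa\}$; (ii) if $bb$ is not an arc, $d^+_{D'}(f^-_{D'}(b))=1$ and $f^-_{D'}(b)$ is domination-forced in $D'$, then $A(D)=A(D')\cup\{ab,aa\}$. Then $D\in\mathcal{T}_n$.
   Context: Digraphs are finite and may contain loops; between two distinct vertices there may be arcs in one or both directions, no repeated arcs; $A(D)$ is the arc set. $N^-(v)=\{u: uv\text{ is an arc}\}$, $N^+(v)=\{u:vu\text{ is an arc}\}$ (loops included), $d^+(v)=|N^+(v)|$. An OLD set of $D$ is a set $S\subseteq V(D)$ such that every vertex has an in-neighbour in $S$ and for every two distinct vertices $u,w$ some vertex of $S$ lies in exactly one of $N^-(u),N^-(w)$. $D$ is locatable if it has an OLD set, and then $\gamma_{OL}(D)$ is the minimum size of an OLD set. A vertex $v$ is domination-forced if some vertex $w$ has $N^-(w)=\{v\}$. An arc $xy$ (possibly a loop) is forcing if $N^-(y)=\{x\}$ or there is a vertex $z$ with $N^-(z)=N^-(y)\setminus\{x\}$. In a locatable digraph $D'$ of order $m$ with $\gamma_{OL}(D')=m$, every vertex $v$ is the head of exactly one forcing arc; its tail is denoted $f^-_{D'}(v)$. The underlying graph of $D$ is the simple undirected graph on $V(D)$ with an edge $xy$ ($x\ne y$) whenever $xy$ or $yx$ is an arc.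 $\mathcal{T}_n$ is the set of all connected locatable digraphs $D$ of order $n$ with $\gamma_{OL}(D)=n$ whose underlying graph is a tree. *)

(* Defs.v *)
(* A digraph on a finite vertex type V is a relation
   D : rel V, where D u v means that uv is an arc (loops allowed). *)
From mathcomp Require Import all_boot.
Set Implicit Arguments. Unset Strict Implicit. Unset Printing Implicit Defensive.

Section Digraphs.
Variable V : finType.
Implicit Types (D : rel V) (S : {set V}).

Definition inN D (v : V) : {set V} := [set u | D u v].
Definition outN D (v : V) : {set V} := [set u | D v u].
Definition outdeg D (v : V) : nat := #|outN D v|.

Definition OLD D S : Prop :=
  (forall v : V, exists2 u, u \in S & D u v) /\
  (forall u w : V, u != w ->
     exists2 s, s \in S & (s \in inN D u) (+) (s \in inN D w)).

Definition locatable D : Prop := exists S, OLD D S.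

Definition gammaOL_is D (k : nat) : Prop :=
  (exists2 S, OLD D S & #|S| = k) /\ (forall S, OLD D S -> k <= #|S|).

Definition dom_forced D (v : V) : Prop := exists w, inN D w = [set v].

Definition forcing_arc D (x y : V) : Prop :=
  D x y /\ (inN D y = [set x] \/ exists z, inN D z = inN D y :\ x).

Definition underlying D : rel V := fun x y => (x != y) && (D x y || D y x).

Definition ug_connected D : Prop := forall x y : V, connect (underlying D) x y.

Definition ug_acyclic D : Prop :=
  forall c : seq V, 3 <= size c -> uniq c -> ~~ cycle (underlying D) c.

Definition ug_tree D : Prop := ug_connected D /\ ug_acyclic D.

Definition in_T (n : nat) D : Prop :=
  #|V| = n /\ ug_connected D /\ locatable D /\ gammaOL_is D n /\ ug_tree D.

End Digraphs.

(* Extensions of D' by a new vertex a = None *)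
Definition ext_i (V : finType) (D' : rel V) (b : V) : rel (option V) :=
  fun x y => match x, y with
             | Some u, Some v => D' u v
             | Some u, None => u == b
             | None, None => true
             | None, Some _ => false
             end.

Definition ext_ii (V : finType) (D' : rel V) (b : V) : rel (option V) :=
  fun x y => match x, y with
             | Some u, Some v => D' u v
             | None, Some v => v == b
             | None, None => true
             | Some _, None => false
             end.

(* Main.v *)
Require Import Defs.
From mathcomp Require Import all_boot.
From Stdlib Require Import Classical.
Set Implicit Arguments. Unset Strict Implicit. Unset Printing Implicit Defensive.

Lemma eqSome (V : eqType) (u v : V) : (Some u == Some v) = (u == v).
Proof. by apply/eqP/eqP => [[]|->]. Qed.

Section Gen.
Variable V : finType.
Implicit Types (D : rel V) (S : {set V}).

Lemma OLD_sup D S S' : OLD D S -> S \subset S' -> OLD D S'.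
Proof.
move=> [Hd Hs] sub; split.
  move=> v; have [u uS Duv] := Hd v; exists u => //; exact: (subsetP sub).
move=> u w uw; have [s sS Hx] := Hs u w uw; exists s => //; exact: (subsetP sub).
Qed.

Lemma OLD_T D : locatable D -> OLD D setT.
Proof. by case=> S HS; apply: OLD_sup HS _; apply: subsetT. Qed.

Definition allforce D := forall v, exists y, forcing_arc D v y.

Lemma gamma_full D : OLD D setT -> allforce D -> gammaOL_is D #|V|.
Proof.
move=> HT Hf; split; first by exists setT => //; rewrite cardsT.
move=> S [Hd Hs].
suff -> : S = setT by rewrite cardsT.
apply/setP => v; rewrite inE.
have [y [Dvy [H1|[z Hz]]]] := Hf v.
- have [u uS Duy] := Hd y.
  have : u \in inN D y by rewrite /inN inE.
  by rewrite H1 inE => /eqP <-.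
- have zy : z != y.
    apply/eqP => E; subst z.
    by move/setP: Hz => /(_ v); rewrite /inN !inE eqxx Dvy.
  have [s sS] := Hs z y zy.
  rewrite Hz /inN !inE => H.
  case: (eqVneq s v) H => [<- //|nsv].
  by rewrite /= addbb.
Qed.

Lemma gamma_force D : OLD D setT -> gammaOL_is D #|V| -> allforce D.
Proof.
move=> [HdT HsT] [_ Hmin] v.
apply: NNPP => Hno.
have : OLD D (setT :\ v).
  split.
  - move=> y; apply: NNPP => Hn.
    have Dvy : D v y.
      have [u _ Duy] := HdT y.
      case: (eqVneq u v) Duy => [<- //| uv Duy]; exfalso; apply: Hn; exists u => //; by rewrite !inE uv.
    apply: Hno; exists y; split => //.
    left; apply/setP => t; rewrite /inN !inE.
    case: (eqVneq t v) => [-> //|tv].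
    apply/negbTE/negP => Dty; apply: Hn; exists t => //; by rewrite !inE tv.
  - move=> u w uw; apply: NNPP => Hn.
    have Heq : forall t, t != v -> (t \in inN D u) = (t \in inN D w).
      move=> t tv; apply: NNPP => H; apply: Hn; exists t; first by rewrite !inE tv.
      move: H; case: (t \in inN D u); case: (t \in inN D w) => //= H; exfalso; exact: (H erefl).
    have [s _ Hx] := HsT u w uw.
    have sv : s = v.
      apply: NNPP => sv; apply: Hn; exists s => //; rewrite !inE andbT; exact/eqP.
    subst s.
    case Hvu : (v \in inN D u) Hx => /= Hx.
    + apply: Hno; exists u; split; first by move: Hvu; rewrite /inN inE.
      right; exists w; apply/setP => t; rewrite in_setD1.
      case: (eqVneq t v) => [->|tv] /=; first exact: negbTE.
      by rewrite Heq.
    + apply: Hno; exists w; split; first by move: Hx; rewrite /inN inE.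
      right; exists u; apply/setP => t; rewrite in_setD1.
      case: (eqVneq t v) => [->|tv] /=; first by rewrite Hvu.
      by rewrite Heq.
move/Hmin; rewrite -cardsT (cardsD1 v [set: V]) in_setT /=.
by rewrite ltnn.
Qed.

Lemma in_T_of D : OLD D setT -> allforce D -> ug_connected D -> ug_acyclic D ->
  in_T #|V| D.
Proof.
move=> HT Hf HC HA; split=> //; split=> //; split; first by exists setT.
split; first exact: gamma_full.
by split.
Qed.

End Gen.

Section Ext.
Variables (V : finType) (D : rel V) (b : V) (E : rel (option V)).
Hypothesis ES : forall u v, E (Some u) (Some v) = D u v.
Hypothesis EN1 : forall x, underlying E None x = (x == Some b).
Hypothesis EN2 : forall x, underlying E x None = (x == Some b).

Lemma und_S u v : underlying E (Some u) (Some v) = underlying D u v.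
Proof. by rewrite /underlying !ES eqSome. Qed.

Lemma path_S x p : path (underlying E) (Some x) (map Some p) = path (underlying D) x p.
Proof. by elim: p x => [|y p IH] x //=; rewrite und_S IH. Qed.

Lemma conn_lift u v : connect (underlying D) u v -> connect (underlying E) (Some u) (Some v).
Proof.
move/connectP => [p pth ->]; apply/connectP; exists (map Some p).
  by rewrite path_S.
by rewrite last_map.
Qed.

Lemma conn_ext : ug_connected D -> ug_connected E.
Proof.
move=> HC.
have Hb : forall x, connect (underlying E) x (Some b) /\ connect (underlying E) (Some b) x.
  case=> [u|]; split.
  - exact: conn_lift.
  - exact: conn_lift.
  - by apply: connect1; rewrite EN1.
  - by apply: connect1; rewrite EN2.
move=> x y; exact: connect_trans (proj1 (Hb x)) (proj2 (Hb y)).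
Qed.

Lemma acyc_ext : ug_acyclic D -> ug_acyclic E.
Proof.
move=> HA c Hs Hu.
case: (boolP (None \in c)) => Hn.
- case: (rot_to Hn) => i s' Hrot.
  rewrite -(rot_cycle i) Hrot.
  rewrite -(size_rot i) Hrot in Hs. rewrite -(rot_uniq i) Hrot in Hu.
  case: s' Hrot Hs Hu => [|x1 [|y t]] // _ _ Hu.
  rewrite /cycle rcons_path.
  apply/negP => /andP[/= /andP[Hx1 Hp] Hl].
  rewrite EN1 in Hx1; rewrite EN2 in Hl.
  move/eqP: Hx1 => Hx1; subst x1.
  move: Hu; rewrite cons_uniq => /andP[_]; rewrite cons_uniq => /andP[Hb _].
  move: Hb; rewrite -(eqP Hl) /=.
  have := mem_last y t. by move=> ->.
- have Hc : c = map Some (pmap id c).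
    elim: c Hn {Hs Hu} => [|[x|] c IH] //=; rewrite in_cons /= => Hn.
    by rewrite -IH.
  rewrite Hc in Hs Hu *.
  rewrite size_map in Hs; rewrite (map_inj_uniq (@Some_inj _)) in Hu.
  have := HA _ Hs Hu.
  case: (pmap id c) => [|x p] //=.
  by rewrite -map_rcons path_S.
Qed.

End Ext.

Theorem lemma25 (n : nat) (V : finType) (D' : rel V) (b : V) :
  1 < n -> in_T (n.-1) D' ->
  (dom_forced D' b -> in_T n (ext_i D' b)) /\
  (forall f : V, forcing_arc D' f b ->
     ~~ D' b b -> outdeg D' f = 1 -> dom_forced D' f ->
     in_T n (ext_ii D' b)).
Proof.
move=> n1 [cardV [HC [Hloc [Hg [_ HA]]]]].
have HT := OLD_T Hloc.
have Hf : allforce D' by apply: gamma_force HT _; rewrite cardV.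
have Hn : n = #|{: option V}| by rewrite card_option cardV prednK // ltnW.
have [HdT HsT] := HT.
split.
- move=> [w Hw]; rewrite Hn.
  have EN1 : forall x, underlying (ext_i D' b) None x = (x == Some b).
    by case=> [u|] //=; rewrite /underlying /= eqSome eq_sym.
  have EN2 : forall x, underlying (ext_i D' b) x None = (x == Some b).
    by case=> [u|] //=; rewrite /underlying /= eqSome orbF.
  apply: in_T_of.
  + split.
    * case=> [v|]; last by exists None; rewrite ?inE.
      have [u _ Duv] := HdT v; by exists (Some u); rewrite ?inE.
    * case=> [u|] [w'|] // xy.
      - have uw : u != w' by rewrite -eqSome.
        have [s _ Hx] := HsT u w' uw.
        by exists (Some s); [by rewrite inE|]; rewrite /inN !inE /=; move: Hx; rewrite /inN !inE.
      - by exists None; [by rewrite inE|]; rewrite /inN !inE.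
      - by exists None; [by rewrite inE|]; rewrite /inN !inE.
  + case=> [x|].
    * have [y [Dxy [H1|[z Hz]]]] := Hf x.
      - exists (Some y); split => //; left; apply/setP => t.
        move/setP: H1 => H1.
        case: t => [u|]; rewrite /inN !inE /=.
          by move: (H1 u); rewrite /inN !inE eqSome.
        by [].
      - exists (Some y); split => //; right; exists (Some z); apply/setP => t.
        move/setP: Hz => Hz.
        case: t => [u|]; rewrite /inN !inE /=.
          by move: (Hz u); rewrite /inN !inE eqSome.
        by [].
    * exists None; split => //; right; exists (Some w); apply/setP => t.
      move/setP: Hw => Hw.
      case: t => [u|]; rewrite /inN !inE /=.
        by move: (Hw u); rewrite /inN !inE.
      by [].
  + exact: conn_ext.
  + exact: acyc_ext.
- move=> f [Dfb Hfb] _ Hout [w Hw]; rewrite Hn.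
  have [c Hc] : exists c, outN D' f = [set c] by apply/cards1P; rewrite -/(outdeg D' f) Hout.
  have Hw' : w = b.
    have : w \in outN D' f by rewrite /outN inE; move/setP: Hw => /(_ f); rewrite /inN !inE eqxx.
    have : b \in outN D' f by rewrite /outN inE.
    by rewrite Hc !inE => /eqP -> /eqP.
  subst w.
  have Hfout : forall y, D' f y -> y = b.
    move=> y Dfy; have : y \in outN D' f by rewrite /outN inE.
    have : b \in outN D' f by rewrite /outN inE.
    by rewrite Hc !inE => /eqP -> /eqP.
  have EN1 : forall x, underlying (ext_ii D' b) None x = (x == Some b).
    by case=> [u|] //=; rewrite /underlying /= eqSome orbF eq_sym.
  have EN2 : forall x, underlying (ext_ii D' b) x None = (x == Some b).
    by case=> [u|] //=; rewrite /underlying /= eqSome.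
  apply: in_T_of.
  + split.
    * case=> [v|]; last by exists None; rewrite ?inE.
      have [u _ Duv] := HdT v; by exists (Some u); rewrite ?inE.
    * case=> [u|] [w'|] // xy.
      - have uw : u != w' by rewrite -eqSome.
        have [s _ Hx] := HsT u w' uw.
        by exists (Some s); [by rewrite inE|]; rewrite /inN !inE /=; move: Hx; rewrite /inN !inE.
      - have [s _ Dsu] := HdT u.
        by exists (Some s); [by rewrite inE|]; rewrite /inN !inE /= Dsu.
      - have [s _ Dsu] := HdT w'.
        by exists (Some s); [by rewrite inE|]; rewrite /inN !inE /= Dsu.
  + case=> [x|].
    * have [y [Dxy Hxy]] := Hf x.
      case: (eqVneq y b) => [yb|ynb].
      - subst y.
        have xf : x = f.
          by move/setP: Hw => /(_ x); rewrite /inN !inE Dxy => /esym/eqP.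
        subst x.
        exists (Some b); split => //; right; exists None; apply/setP => t.
        case: t => [u|]; rewrite /inN !inE /=.
          move/setP: Hw => /(_ u); rewrite /inN !inE => ->.
          by rewrite eqSome; case: (u == f).
        by rewrite eqxx.
      - exists (Some y); split => //.
        case: Hxy => [H1|[z Hz]].
        + left; apply/setP => t.
          move/setP: H1 => H1.
          case: t => [u|]; rewrite /inN !inE /=.
            by move: (H1 u); rewrite /inN !inE eqSome.
          by rewrite (negbTE ynb).
        + have znb : z != b.
            apply/eqP => zb; subst z.
            have : f \in inN D' b by rewrite Hw inE.
            rewrite Hz !inE => /andP[_]; move/Hfout.
            by move/eqP; rewrite (negbTE ynb).
          right; exists (Some z); apply/setP => t.
          move/setP: Hz => Hz.
          case: t => [u|]; rewrite /inN !inE /=.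
            by move: (Hz u); rewrite /inN !inE eqSome.
          by rewrite (negbTE ynb) (negbTE znb).
    * exists None; split => //; left; apply/setP => t.
      by case: t => [u|]; rewrite /inN !inE.
  + exact: conn_ext.
  + exact: acyc_ext.
Qed.
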